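(* Let the reaction network have a stoichiometric matrix $S$ of full rank $M$. Then the network is regular, i.e. $\det(SR)\neq 0$ algebraically, if and only if there exists a child selection $J:\mathcal M\to\mathcal E$ such that $J(\mathcal M)$ selects an $S$-basis, i.e. $\det S^{J(\mathcal M)}\neq 0$ (equivalently, $\ker S$ contains no nonzero vector supported in $J(\mathcal M)$).
   Context: A reaction network consists of a finite set of metabolites $\mathcal M=\{1,\dots,M\}$ and a finite set of reactions $\mathcal E=\{1,\dots,E\}$. Each reaction $j$ has an input stoichiometric vector $y^j\in\mathbb R_{\ge0}^M$ and an output stoichiometric vector $\bar y^j\in\mathbb R_{\ge0}^M$. Write $m\vdash j$ (metabolite $m$ is an input, or ''mother'', of reaction $j$) iff $y^j_m\neq 0$. The stoichiometric matrix $S$ is the real $M\times E$ matrix whose $j$-th column is $S^j=\bar y^j-y^j$. The rate matrix $R=(r_{jm})_{j\in\mathcal E,m\in\mathcal M}$ is the $E\times M$ matrix whose entries $r_{jm}$ with $m\vdash j$ are independent indeterminates, and $r_{jm}=0$ whenever $m\not\vdash j$. A polynomial or rational expression in these indeterminates is ''nonzero algebraically'' if it is not the zero polynomial / zero rational function. For $\mathcal E'\subseteq\mathcal E$, $S^{\mathcal E'}$ denotes the submatrix of $S$ consisting of the columns indexed by $\mathcal E'$; $\mathcal E'$ ''selects an $S$-basis'' if $|\mathcal E'|=M$ and $\det S^{\mathcal E'}\neq0$. A child selection is an injective map $J:\mathcal M\to\mathcal E$ with $m\vdash J(m)$ for every $m\in\mathcal M$. The network is called regular if $\det(SR)\neq0$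 algebraically. *)

(* Defs.v *)
From HB Require Import structures.
From mathcomp Require Import all_boot all_order all_algebra.
Set Implicit Arguments. Unset Strict Implicit. Unset Printing Implicit Defensive.
Import Order.TTheory GRing.Theory Num.Theory.
Local Open Scope ring_scope.

(* Multivariate polynomial ring in n indeterminates over R, as iterated
   univariate polynomials: mpoly R n = R[X_0][X_1]...[X_{n-1}]. *)
Fixpoint mpoly (R : idomainType) (n : nat) : idomainType :=
  match n with
  | 0 => R
  | n'.+1 => ({poly mpoly R n'} : idomainType)
  end.

Fixpoint mconst (R : idomainType) (n : nat) (x : R) : mpoly R n :=
  match n return mpoly R n with
  | 0 => x
  | n'.+1 => (mconst n' x)%:P
  end.

(* the k-th indeterminate X_k of mpoly R n (0 if k >= n) *)
Fixpoint mvar (R : idomainType) (n k : nat) : mpoly R n :=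
  match n return mpoly R n with
  | 0 => 0
  | n'.+1 => if k == n' then 'X else (mvar R n' k)%:P
  end.

Section Network.
Variables (R : realFieldType) (M E : nat).

(* y, ybar : columns are the input / output stoichiometric vectors y^j, ybar^j *)
Definition stoich (y ybar : 'M[R]_(M, E)) : 'M[R]_(M, E) := ybar - y.

(* m |- j : metabolite m is an input (mother) of reaction j *)
Definition mother (y : 'M[R]_(M, E)) (m : 'I_M) (j : 'I_E) : bool := y m j != 0.

Definition nvars : nat := #|{: 'I_E * 'I_M}|.

Definition rate_matrix (y : 'M[R]_(M, E)) : 'M[mpoly R nvars]_(E, M) :=
  \matrix_(j < E, m < M)
    (if mother y m j then mvar R nvars (enum_rank (j, m)) else 0).

Definition stoich_poly (y ybar : 'M[R]_(M, E)) : 'M[mpoly R nvars]_(M, E) :=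
  map_mx (@mconst R nvars) (stoich y ybar).

Definition regular (y ybar : 'M[R]_(M, E)) : Prop :=
  \det (stoich_poly y ybar *m rate_matrix y) != 0.

Definition child_selection (y : 'M[R]_(M, E)) (J : 'I_M -> 'I_E) : Prop :=
  injective J /\ forall m, mother y m (J m).

(* J(M) selects an S-basis: det of the columns S^{J(m)} is nonzero
   (|J(M)| = M holds by injectivity) *)
Definition selects_basis (S : 'M[R]_(M, E)) (J : 'I_M -> 'I_E) : Prop :=
  \det (colsub J S) != 0.

End Network.

(* Main.v *)
Require Import Defs.
From HB Require Import structures.
From mathcomp Require Import all_boot all_order all_algebra all_fingroup.
Import Order.TTheory GRing.Theory Num.Theory.
Local Open Scope ring_scope.

Fixpoint mev (R : idomainType) (n : nat) (v : nat -> R) : {rmorphism mpoly R n -> R} :=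
  match n return {rmorphism mpoly R n -> R} with
  | 0 => GRing.RMorphism.clone _ _ idfun _
  | n'.+1 => GRing.RMorphism.clone _ _ ((mev R n' v) \o horner_eval (mconst n' (v n'))) _
  end.

Lemma mev_const (R : idomainType) n v (x : R) : mev R n v (mconst n x) = x.
Proof. elim: n => [|n IH] //=. by rewrite /horner_eval hornerC IH. Qed.

Lemma mev_var (R : idomainType) n v k : (k < n)%N -> mev R n v (mvar R n k) = v k.
Proof.
elim: n => [//|n IH] Hk /=. rewrite /horner_eval.
case: eqP => [->|/eqP ne]; first by rewrite hornerX mev_const.
rewrite hornerC IH //. by move: Hk; rewrite ltnS leq_eqVlt (negbTE ne).
Qed.

Fixpoint mc (R : idomainType) (n : nat) : {rmorphism R -> mpoly R n} :=
  match n return {rmorphism R -> mpoly R n} with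
  | 0 => GRing.RMorphism.clone _ _ idfun _
  | n'.+1 => GRing.RMorphism.clone _ _ (@polyC _ \o mc R n') _
  end.

Lemma mcE (R : idomainType) n x : mc R n x = mconst n x.
Proof. by elim: n => [|n IH] //=; rewrite IH. Qed.

Lemma det_colsub_inj (T : comNzRingType) m e (S : 'M[T]_(m,e)) (g : 'I_m -> 'I_e) :
  \det (colsub g S) != 0 -> injective g.
Proof.
move=> H i1 i2 E; apply/eqP; apply: contraNT H => ne.
rewrite -det_tr; apply/eqP/(determinant_alternate ne) => k.
by rewrite !mxE E.
Qed.
Lemma det_mul_expand (T : comNzRingType) m e (S : 'M[T]_(m,e)) (Rm : 'M[T]_(e,m)) :
  \det (S *m Rm) = \sum_(g : {ffun 'I_m -> 'I_e}) \det (colsub g S) * \prod_k Rm (g k) k.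
Proof.
rewrite /determinant.
transitivity (\sum_(s : 'S_m) \sum_(g : {ffun 'I_m -> 'I_e})
   (-1) ^+ s * ((\prod_i S i (g (s i))) * \prod_k Rm (g k) k)).
  apply: eq_bigr => s _.
  under eq_bigr do rewrite mxE.
  rewrite bigA_distr_bigA big_distrr /=.
  pose h (g : {ffun 'I_m -> 'I_e}) := [ffun i => g (s i)].
  have hinj : injective h.
    move=> g1 g2 /ffunP E; apply/ffunP => k.
    by have := E (s^-1 k)%g; rewrite !ffunE permKV.
  rewrite (reindex_inj hinj); apply: eq_bigr => g _; congr (_ * _).
  rewrite big_split /=; congr (_ * _); first by apply: eq_bigr => i _; rewrite ffunE.
  rewrite [RHS](reindex_inj (@perm_inj _ s)) /=.
  by apply: eq_bigr => i _; rewrite ffunE.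
rewrite exchange_big /=; apply: eq_bigr => g _.
rewrite big_distrl /=; apply: eq_bigr => s _.
by rewrite mulrA; congr (_ * _ * _); apply: eq_bigr => i _; rewrite mxE.
Qed.

Lemma map_stoich (R : realFieldType) M E (y ybar : 'M[R]_(M, E)) (f : {rmorphism mpoly R (nvars M E) -> R}) :
  (forall x, f (mconst (nvars M E) x) = x) ->
  map_mx f (stoich_poly y ybar) = stoich y ybar.
Proof. by move=> Hf; apply/matrixP => i j; rewrite !mxE Hf. Qed.

Theorem theorem2p1 (R : realFieldType) (M E : nat) (y ybar : 'M[R]_(M, E))
  (hy : forall m j, 0 <= y m j) (hybar : forall m j, 0 <= ybar m j)
  (hrank : \rank (stoich y ybar) = M) :
  regular y ybar <->
  exists J : 'I_M -> 'I_E, child_selection y J /\ selects_basis (stoich y ybar) J.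
Proof.
rewrite /regular /selects_basis; split.
- rewrite det_mul_expand => H.
  have [/existsP [g Hg] | /existsPn Hn] :=
    boolP [exists g : {ffun 'I_M -> 'I_E},
      \det (colsub g (stoich_poly y ybar)) * \prod_k rate_matrix y (g k) k != 0].
  + rewrite mulf_eq0 negb_or in Hg; case/andP: Hg => Hd Hp.
    have HdR : \det (colsub g (stoich y ybar)) != 0.
      apply: contraNneq Hd => H0.
      have -> : colsub g (stoich_poly y ybar) = map_mx (mc R (nvars M E)) (colsub g (stoich y ybar)).
        by apply/matrixP => i j; rewrite !mxE mcE.
      by rewrite det_map_mx H0 rmorph0.
    exists g; split => //; split; first exact: det_colsub_inj HdR.
    move=> m; move/prodf_neq0: Hp => /(_ m isT).
    by rewrite mxE; case: (mother y m (g m)) => //; rewrite eqxx.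
  + case/negP: H; rewrite big1 // => g _.
    by have := Hn g; rewrite negbK => /eqP.
- case=> J [[Jinj Jm] Hdet].
  pose v : nat -> R := fun k =>
    if [exists m : 'I_M, k == (enum_rank (J m, m) : nat)] then 1 else 0.
  apply: contraNneq Hdet => H0.
  have := congr1 (mev R (nvars M E) v) H0.
  rewrite rmorph0 -det_map_mx map_mxM map_stoich; last exact: mev_const.
  move=> <-; apply/eqP; congr (\det _); apply/matrixP => i m; rewrite !mxE.
  rewrite (bigD1 (J m)) //= big1 ?addr0.
    rewrite !mxE Jm mev_var //= /v.
    by case: existsP => [_|[]]; [rewrite mulr1 | exists m].
  move=> j /negbTE ne; rewrite !mxE; case: (mother y m j); last by rewrite rmorph0 mulr0.
  rewrite mev_var //= /v; case: existsP => [[m' /eqP Ek]|_]; last by rewrite mulr0.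
  move/val_inj/enum_rank_inj: Ek => [E1 E2]; subst m'.
  by rewrite E1 eqxx in ne.
Qed.
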